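(* Let $G_1,\dots,G_k$ be finite connected graphs and $G=G_1\Box G_2\Box\cdots\Box G_k$. If each distance matrix $D(G_i)$, $i=1,\dots,k$, has constant row sums, then (a) $n_-(D(G))=\sum_{i=1}^k n_-(D(G_i))$, and (b) $n_+(D(G))=1+\sum_{i=1}^k\bigl(n_+(D(G_i))-1\bigr)$.
   Context: For a connected graph $G$ with vertices $v_1,\dots,v_n$, the distance matrix $D(G)$ is the $n\times n$ matrix with $(i,j)$ entry equal to the graph distance $d(v_i,v_j)$. For a real symmetric matrix $M$, $n_+(M)$ and $n_-(M)$ denote the numbers of positive and negative eigenvalues counted with multiplicity. The Cartesian product $G_1\Box\cdots\Box G_k$ has vertex set $V(G_1)\times\cdots\times V(G_k)$, with $(x_1,\dots,x_k)$ adjacent to $(y_1,\dots,y_k)$ iff for some $j$, $x_j$ is adjacent to $y_j$ in $G_j$ and $x_i=y_i$ for all $i\ne j$. *)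

(* Defs.v *)
From HB Require Import structures.
From mathcomp Require Import all_boot all_order all_algebra.
From mathcomp Require Import polyrcf.
Set Implicit Arguments. Unset Strict Implicit. Unset Printing Implicit Defensive.
Import Order.TTheory GRing.Theory Num.Theory.
Local Open Scope ring_scope.

Definition simple_graph (V : finType) (e : rel V) : Prop :=
  symmetric e /\ irreflexive e.

Definition connected_graph (V : finType) (e : rel V) : Prop :=
  forall x y : V, connect e x y.

Fixpoint nwalk (V : finType) (e : rel V) (n : nat) (x y : V) : bool :=
  if n is n'.+1 then [exists z, e x z && nwalk e n' z y] else x == y.

(* Graph distance: least n with a walk of length n from x to y (for a
   connected graph such n exists and is < #|V|). *)
Definition gdist (V : finType) (e : rel V) (x y : V) : nat :=
  find (fun n => nwalk e n x y) (iota 0 #|V|).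

Definition distmx (R : nzRingType) (V : finType) (e : rel V) : 'M[R]_#|V| :=
  \matrix_(i, j) (gdist e (enum_val i) (enum_val j))%:R.

Definition cprod_rel (k : nat) (V : 'I_k -> finType)
  (e : forall i, rel (V i)) : rel {dffun forall i, V i} :=
  fun x y => [exists j, e j (x j) (y j) && [forall i, (i != j) ==> (x i == y i)]].

Definition n_pos (R : rcfType) (n : nat) (M : 'M[R]_n) : nat :=
  \sum_(x <- rootsR (char_poly M) | 0 < x) mup x (char_poly M).
Definition n_neg (R : rcfType) (n : nat) (M : 'M[R]_n) : nat :=
  \sum_(x <- rootsR (char_poly M) | x < 0) mup x (char_poly M).

Definition const_row_sums (R : nzRingType) (n : nat) (M : 'M[R]_n) : Prop :=
  exists c : R, forall i, \sum_j M i j = c.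

(* Main.v *)
Require Import Defs.
From HB Require Import structures.
From mathcomp Require Import all_boot all_order all_algebra.
From mathcomp Require Import polyrcf lra.
Import Order.TTheory GRing.Theory Num.Theory.

Module Part_P1.
Set Implicit Arguments. Unset Strict Implicit. Unset Printing Implicit Defensive.
Local Open Scope ring_scope.

Section Count.
Variable R : rcfType.
Implicit Types p q : {poly R}.

Definition cnt (P : pred R) p : nat := \sum_(x <- rootsR p | P x) mup x p.

Lemma mem_rootsR p x : p != 0 -> (x \in rootsR p) = root p x.
Proof. by move=> pz; rewrite -(roots_on_rootsR pz x). Qed.

Lemma cnt_any (P : pred R) p (s : seq R) : p != 0 -> uniq s ->
  (forall x, root p x -> x \in s) ->
  cnt P p = \sum_(x <- s | P x) mup x p.
Proof.
move=> pz us hs; rewrite /cnt.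
rewrite [RHS](bigID (root p)) /=.
rewrite [X in _ = _ + X]big1; last first.
  by move=> x /andP[_ nr]; rewrite mupNroot.
rewrite addr0.
rewrite -[LHS]big_filter -[RHS]big_filter.
apply: perm_big; apply: uniq_perm.
- by apply: filter_uniq; apply: uniq_roots.
- by apply: filter_uniq.
move=> x; rewrite !mem_filter /= mem_rootsR //.
by case: (root p x) (hs x) => [->|_]; rewrite ?andbT ?andbF.
Qed.

Lemma cntM (P : pred R) p q : p != 0 -> q != 0 ->
  cnt P (p * q) = (cnt P p + cnt P q)%N.
Proof.
move=> pz qz; have pqz : p * q != 0 by rewrite mulf_neq0.
set s := undup (rootsR p ++ rootsR q).
have us : uniq s by apply: undup_uniq.
have hp x : root p x -> x \in s.
  by move=> rx; rewrite mem_undup mem_cat mem_rootsR // rx.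
have hq x : root q x -> x \in s.
  by move=> rx; rewrite mem_undup mem_cat (mem_rootsR x qz) rx orbT.
rewrite (cnt_any P pqz us); last by move=> x; rewrite rootM => /orP[/hp|/hq].
rewrite (cnt_any P pz us hp) (cnt_any P qz us hq) -big_split /=.
by apply: eq_bigr => x _; rewrite mupM.
Qed.

Lemma cnt_XsubC (P : pred R) a : cnt P ('X - a%:P) = (if P a then 1 else 0)%N.
Proof.
have nz : 'X - a%:P != 0 by rewrite polyXsubC_eq0.
rewrite (cnt_any P nz (s := [:: a])) //; last first.
  by move=> x; rewrite root_XsubC => /eqP ->; rewrite inE.
rewrite big_cons big_nil addr0.
by rewrite -[X in mup _ X]expr1 mup_XsubCX eqxx.
Qed.

Lemma cnt_Xn (P : pred R) n : ~~ P 0 -> cnt P ('X^n) = 0%N.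
Proof.
move=> nP; have nz : ('X^n : {poly R}) != 0 by rewrite monic_neq0 ?monicXn.
rewrite (cnt_any P nz (s := [:: 0])) //; last first.
  by move=> x; rewrite /root hornerXn expf_eq0 => /andP[_ /eqP ->]; rewrite inE.
by rewrite big_cons big_nil (negbTE nP).
Qed.

Lemma mupZ x c p : c != 0 -> mup x (c *: p) = mup x p.
Proof.
move=> cz; have [->|pz] := eqVneq p 0; first by rewrite scaler0.
have cpz : c *: p != 0 by rewrite scaler_eq0 negb_or cz.
have h n : (n <= mup x (c *: p))%N = (n <= mup x p)%N.
  by rewrite !mup_geq // dvdpZr.
by apply/eqP; rewrite eqn_leq h leqnn -h leqnn.
Qed.

Lemma cntZ (P : pred R) c p : c != 0 -> cnt P (c *: p) = cnt P p.
Proof.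
move=> cz; have [->|pz] := eqVneq p 0; first by rewrite scaler0.
have cpz : c *: p != 0 by rewrite scaler_eq0 negb_or cz.
rewrite (cnt_any P cpz (s := rootsR p)) ?uniq_roots //; last first.
  by move=> x; rewrite rootZ // -mem_rootsR.
by apply: eq_bigr => x _; rewrite mupZ.
Qed.

Lemma dvdp_comp (a b r : {poly R}) : a %| b -> a \Po r %| b \Po r.
Proof. by move/dvdpP => [q ->]; rewrite comp_polyM dvdp_mull. Qed.

Lemma comp_polyXn (a r : {poly R}) n : (a ^+ n) \Po r = (a \Po r) ^+ n.
Proof.
elim: n => [|n IH]; first by rewrite !expr0 comp_polyC.
by rewrite !exprS comp_polyM IH.
Qed.

Lemma comp_scaleX (c : R) (r : {poly R}) : (c *: 'X) \Po r = c *: r.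
Proof. by rewrite comp_polyZ comp_polyX. Qed.

Lemma comp_scaleK (c : R) p : c != 0 -> (p \Po (c *: 'X)) \Po (c^-1 *: 'X) = p.
Proof.
move=> cz; rewrite -comp_polyA comp_scaleX scalerA mulfV // scale1r.
by rewrite comp_polyXr.
Qed.

Lemma mup0 x : mup x (0 : {poly R}) = 0%N.
Proof.
rewrite /mup; case: arg_maxnP => //= i _ _.
by case: i => -[|m] //=; rewrite size_poly0.
Qed.

Lemma mup_comp x c p : c != 0 -> mup x (p \Po (c *: 'X)) = mup (c * x) p.
Proof.
move=> cz; have [->|pz] := eqVneq p 0; first by rewrite comp_poly0 !mup0.
have cpz : p \Po (c *: 'X) != 0.
  by apply: contra_neq pz => h; rewrite -(comp_scaleK p cz) h comp_poly0.
have icz : c^-1 != 0 by rewrite invr_eq0.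
have h n : (n <= mup x (p \Po (c *: 'X)))%N = (n <= mup (c * x) p)%N.
  rewrite !mup_geq //; apply/idP/idP => hd.
    have := (@dvdp_comp _ _ (c^-1 *: 'X) hd); rewrite comp_scaleK // comp_polyXn.
    rewrite comp_polyB comp_polyX comp_polyC.
    have -> : c^-1 *: 'X - x%:P = c^-1 *: ('X - (c * x)%:P).
      by rewrite scalerBr -[c^-1 *: (c * x)%:P]mul_polyC -polyCM mulrA mulVf // mul1r.
    by rewrite exprZn dvdpZl // expf_neq0.
  have := (@dvdp_comp _ _ (c *: 'X) hd); rewrite comp_polyXn.
  rewrite comp_polyB comp_polyX comp_polyC.
  have -> : c *: 'X - (c * x)%:P = c *: ('X - x%:P).
    by rewrite scalerBr -[c *: x%:P]mul_polyC -polyCM.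
  by rewrite exprZn dvdpZl // expf_neq0.
by apply/eqP; rewrite eqn_leq h leqnn -h leqnn.
Qed.

Lemma cnt_comp (P : pred R) c p : c != 0 -> (forall x, P (c * x) = P x) ->
  cnt P (p \Po (c *: 'X)) = cnt P p.
Proof.
move=> cz hP; have [->|pz] := eqVneq p 0; first by rewrite comp_poly0.
have cpz : p \Po (c *: 'X) != 0.
  by apply: contra_neq pz => h; rewrite -(comp_scaleK p cz) h comp_poly0.
rewrite (cnt_any P cpz (s := map (fun y => c^-1 * y) (rootsR p))); last first.
- move=> x; rewrite /root horner_comp hornerZ hornerX => rx.
  apply/mapP; exists (c * x); first by rewrite mem_rootsR.
  by rewrite mulKf.
- rewrite map_inj_uniq ?uniq_roots //; apply: (can_inj (g := fun y => c * y)).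
  by move=> y /=; rewrite mulrA mulfV // mul1r.
rewrite big_map /cnt; apply: eq_big => y.
  by rewrite -hP mulrA mulfV // mul1r.
by move=> _; rewrite mup_comp // mulrA mulfV // mul1r.
Qed.

Lemma cnt_prod (I : Type) (P : pred R) (r : seq I) (F : I -> {poly R}) :
  (forall i, F i != 0) ->
  cnt P (\prod_(i <- r) F i) = (\sum_(i <- r) cnt P (F i))%N.
Proof.
move=> nz; elim: r => [|i r IH].
  rewrite !big_nil -[1]/(1%:P : {poly R}) /cnt rootsRC big_nil //.
have pz : \prod_(j <- r) F j != 0.
  by elim: (r) => [|j r' IH']; rewrite ?big_nil ?oner_eq0 // big_cons mulf_neq0.
by rewrite !big_cons cntM // IH.
Qed.

End Count.

End Part_P1.
Import Part_P1.

Module Part_P2.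
Set Implicit Arguments. Unset Strict Implicit. Unset Printing Implicit Defensive.
Local Open Scope ring_scope.

Section CharPoly.
Variable R : fieldType.

Lemma char_poly_ABBA m n (A : 'M[R]_(m, n)) (B : 'M[R]_(n, m)) :
  'X^n * char_poly (A *m B) = 'X^m * char_poly (B *m A).
Proof.
set x : {poly R} := 'X.
set A' := map_mx polyC A; set B' := map_mx polyC B.
set K := block_mx (x%:M : 'M_m) A' B' (1%:M : 'M_n).
have e1 : block_mx 1%:M (- A') 0 (x%:M) *m K =
   block_mx (char_poly_mx (A *m B)) 0 (x%:M *m B') (x%:M).
  rewrite mulmx_block /char_poly_mx map_mxM -/A' -/B'.
  rewrite !mul1mx !mul0mx !mulmx1 !add0r mulNmx addrC subrr.
  by [].
have e2 : block_mx 1%:M 0 (- B') (x%:M) *m K =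
   block_mx (x%:M) A' 0 (char_poly_mx (B *m A)).
  rewrite mulmx_block /char_poly_mx map_mxM -/A' -/B'.
  rewrite !mul1mx !mul0mx !mulmx1 !addr0 mulNmx mul_mx_scalar mul_scalar_mx.
  by rewrite addNr mulNmx addrC.
have := congr1 determinant e1; rewrite det_mulmx det_ublock det_lblock.
rewrite !det_scalar expr1n mul1r [RHS]mulrC => h1.
have := congr1 determinant e2; rewrite det_mulmx det_ublock det_lblock.
rewrite !det_scalar expr1n mul1r => h2.
by rewrite /char_poly -h1 h2.
Qed.

Lemma char_poly_orth n (M1 M2 : 'M[R]_n) : M1 *m M2 = 0 ->
  'X^n * char_poly (M1 + M2) = char_poly M1 * char_poly M2.
Proof.
move=> h12.
have e : char_poly_mx M1 *m char_poly_mx M2 = 'X%:M *m char_poly_mx (M1 + M2).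
  rewrite /char_poly_mx mulmxBl !mulmxBr -map_mxM h12 map_mx0 subr0.
  rewrite map_mxD mulmxDr opprD addrA addrAC; congr (_ - _).
  by rewrite scalar_mxC.
by rewrite /char_poly -det_mulmx e det_mulmx det_scalar.
Qed.

Lemma char_poly_orth_big (I : eqType) n (M0 : 'M[R]_n) (C : I -> 'M[R]_n)
  (r : seq I) :
  (forall i, M0 *m C i = 0) -> (forall i j, i != j -> C i *m C j = 0) ->
  uniq r ->
  'X^(n * size r) * char_poly (M0 + \sum_(i <- r) C i) =
  char_poly M0 * \prod_(i <- r) char_poly (C i).
Proof.
move=> h0 hC; elim: r => [|i r IH] /=.
  by rewrite big_nil addr0 big_nil muln0 expr0 mul1r mulr1.
move=> /andP[ir ur].
have hz : (M0 + \sum_(j <- r) C j) *m C i = 0.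
  rewrite mulmxDl h0 add0r mulmx_suml big_seq big1 // => j jr.
  by apply: hC; apply: contraNneq ir => <-.
rewrite big_cons addrA [M0 + C i]addrC -addrA addrC.
rewrite mulnS exprD -mulrA mulrCA char_poly_orth // mulrA IH //.
by rewrite big_cons [char_poly (C i) * _]mulrC mulrA.
Qed.

Lemma char_poly11 (M : 'M[R]_1) : char_poly M = 'X - (M 0 0)%:P.
Proof. by rewrite /char_poly det_mx11 !mxE. Qed.

Lemma char_poly_const n (b : R) :
  'X * char_poly (const_mx b : 'M[R]_n) = 'X^n * ('X - (b *+ n)%:P).
Proof.
have e1 : (const_mx b : 'M[R]_(n, 1)) *m (const_mx 1 : 'M[R]_(1, n)) = const_mx b.
  by apply/matrixP => i j; rewrite !mxE big_ord1 !mxE mulr1.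
have e2 : (const_mx 1 : 'M[R]_(1, n)) *m (const_mx b : 'M[R]_(n, 1)) = const_mx (b *+ n).
  apply/matrixP => i j; rewrite !mxE (eq_bigr (fun _ => b)).
    by rewrite sumr_const card_ord.
  by move=> k _; rewrite !mxE mul1r.
have := char_poly_ABBA (const_mx b : 'M[R]_(n, 1)) (const_mx 1 : 'M[R]_(1, n)).
by rewrite e1 e2 expr1 char_poly11 mxE.
Qed.

End CharPoly.

End Part_P2.
Import Part_P2.

Module Part_P3.
Set Implicit Arguments. Unset Strict Implicit. Unset Printing Implicit Defensive.

Section Dist.
Variables (V : finType) (e : rel V).

Lemma nwalkP n x y :
  reflect (exists p, [/\ size p = n, path e x p & last x p = y]) (nwalk e n x y).
Proof.
elim: n x => [|n IH] x /=.
  apply: (iffP eqP) => [->|[p [sp _ lp]]]; first by exists [::].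
  by case: p sp lp => // _ <-.
apply: (iffP existsP) => [[z /andP[exz /IH [p [sp pp lp]]]]|[p [sp pp lp]]].
  by exists (z :: p); rewrite /= sp exz pp lp.
case: p sp pp lp => [|z p] //= [sp] /andP[exz pp] lp.
by exists z; rewrite exz /=; apply/IH; exists p.
Qed.

Lemma nwalk_connect n x y : nwalk e n x y -> connect e x y.
Proof. by move/nwalkP => [p [_ pp lp]]; apply/connectP; exists p. Qed.

Lemma connect_nwalk x y : connect e x y -> exists2 n, n < #|V| & nwalk e n x y.
Proof.
move/connectP => [p pp ->]; case: (shortenP pp) => p' pp' up' _.
exists (size p'); last by apply/nwalkP; exists p'.
by have := max_card (mem (x :: p')); rewrite (card_uniqP up').
Qed.

Lemma gdist_min m x y : nwalk e m x y -> gdist e x y <= m.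
Proof.
move=> hm; rewrite /gdist; case: (ltnP m #|V|) => hV; last first.
  by apply: leq_trans (find_size _ _) _; rewrite size_iota.
rewrite leqNgt; apply/negP => /(before_find 0).
by rewrite nth_iota // add0n hm.
Qed.

Lemma gdist_walk x y : connect e x y -> nwalk e (gdist e x y) x y.
Proof.
move=> /connect_nwalk [n nV hn].
have hs : has (fun n => nwalk e n x y) (iota 0 #|V|).
  by apply/hasP; exists n => //; rewrite mem_iota.
have := nth_find 0 hs; rewrite has_find size_iota in hs.
by rewrite nth_iota.
Qed.

Lemma gdist0 x : gdist e x x = 0.
Proof. by apply/eqP; rewrite -leqn0; apply: gdist_min; rewrite /= eqxx. Qed.

Lemma gdist_gt0 x y : connect e x y -> x != y -> 0 < gdist e x y.
Proof.
move=> cxy; apply: contraNT; rewrite -eqn0Ngt => /eqP h.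
by have := gdist_walk cxy; rewrite h.
Qed.

Lemma nwalk_sym n x y : symmetric e -> nwalk e n x y -> nwalk e n y x.
Proof.
move=> se /nwalkP [p [sp pp lp]]; apply/nwalkP.
exists (rev (belast x p)); split.
- by rewrite size_rev size_belast.
- rewrite -lp rev_path; rewrite (eq_path (e' := e)) // => a b /=; exact: se.
- rewrite -lp; case: p {sp pp lp} => //= z p.
  by rewrite rev_cons last_rcons.
Qed.

Lemma gdist_sym x y : symmetric e -> gdist e x y = gdist e y x.
Proof.
move=> se; rewrite /gdist; apply: eq_find => n.
by apply/idP/idP; apply: nwalk_sym.
Qed.

Lemma gdist_step x z y : connect e z y -> e x z -> gdist e x y <= (gdist e z y).+1.
Proof.
move=> czy exz; apply: gdist_min => /=; apply/existsP; exists z.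
by rewrite exz gdist_walk.
Qed.

End Dist.

End Part_P3.
Import Part_P3.

Module Part_P4.
Set Implicit Arguments. Unset Strict Implicit. Unset Printing Implicit Defensive.

Section Prod.
Local Unset Implicit Arguments.
Variables (k : nat) (V : 'I_k -> finType) (e : forall i, rel (V i)).
Local Set Implicit Arguments.
Local Notation X := {dffun forall i, V i}.

Local Unset Implicit Arguments.
Definition upd (x : X) (i : 'I_k) (y : V i) : X :=
  [ffun j => dfwith (fun j => x j) y j].
Local Set Implicit Arguments.

Lemma upd_same x i y : upd x i y i = y.
Proof. by rewrite ffunE dfwith_in. Qed.

Lemma upd_other x i y j : i != j -> upd x i y j = x j.
Proof. by move=> ij; rewrite ffunE dfwith_out. Qed.

Lemma upd_id x i : upd x i (x i) = x.
Proof.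
apply/ffunP => j; case: (eqVneq i j) => [<-|ij]; first by rewrite upd_same.
by rewrite upd_other.
Qed.

Lemma upd_upd x i y y' : upd (upd x i y) i y' = upd x i y'.
Proof.
apply/ffunP => j; case: (eqVneq i j) => [<-|ij]; first by rewrite !upd_same.
by rewrite !upd_other.
Qed.


Hypothesis conn : forall i, connected_graph (e i).

Definition Sd (a b : X) : nat := \sum_(i < k) gdist (e i) (a i) (b i).

Lemma Sd_step (a z b : X) : cprod_rel e a z -> Sd a b <= (Sd z b).+1.
Proof.
move=> /existsP [j /andP [ej /forallP hj]].
rewrite /Sd (bigD1 j) //= [X in _ <= X.+1](bigD1 j) //= -addSn.
rewrite leq_add ?gdist_step //; first by apply: conn.
rewrite leq_eqVlt; apply/orP; left; apply/eqP; apply: eq_bigr => i ij.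
by have /implyP/(_ ij)/eqP -> := hj i.
Qed.

Lemma Sd_min m (a b : X) : nwalk (cprod_rel e) m a b -> Sd a b <= m.
Proof.
elim: m a => [|m IH] a /=.
  by move=> /eqP ->; rewrite /Sd big1 // => i _; rewrite gdist0.
move=> /existsP [z /andP [az hz]].
by apply: leq_trans (Sd_step b az) _; rewrite ltnS IH.
Qed.

Lemma Sd_walk (a b : X) : nwalk (cprod_rel e) (Sd a b) a b.
Proof.
move: {2}(Sd a b) (erefl (Sd a b)) => s; elim: s a => [|s IH] a hs.
  rewrite hs /=; apply/eqP/ffunP => i.
  have : gdist (e i) (a i) (b i) == 0.
    by rewrite -leqn0 -hs /Sd (bigD1 i) //= leq_addr.
  move=> /eqP h0; have := gdist_walk (conn (a i) (b i)).
  by rewrite h0 => /eqP.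
case: (pickP (fun j => 0 < gdist (e j) (a j) (b j))) => [j hj|h0]; last first.
  move: hs; rewrite /Sd big1 // => i _.
  by have := h0 i; rewrite /= lt0n => /negbFE /eqP.
have := gdist_walk (conn (a j) (b j)).
case hd: (gdist (e j) (a j) (b j)) hj => [//|d] _ /= /existsP [z /andP [ez wz]].
have hzd : gdist (e j) z (b j) = d.
  apply/eqP; rewrite eqn_leq gdist_min //=.
  by have := gdist_step (conn z (b j)) ez; rewrite hd ltnS.
set a' := upd a j z.
have ha' : Sd a' b = s.
  apply/eqP; rewrite -eqSS -hs /Sd (bigD1 j) //= [X in _ == X](bigD1 j) //=.
  rewrite upd_same hzd hd addSn eqSS eqn_add2l; apply/eqP.
  by apply: eq_bigr => i ij; rewrite upd_other // eq_sym.
rewrite hs /=; apply/existsP; exists a'; rewrite -{1}ha' IH // andbT.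
apply/existsP; exists j; rewrite upd_same ez /=.
by apply/forallP => i; apply/implyP => ij; rewrite upd_other // eq_sym.
Qed.

Lemma gdist_prod (a b : X) : gdist (cprod_rel e) a b = Sd a b.
Proof.
have w := Sd_walk a b.
apply/eqP; rewrite eqn_leq gdist_min //=.
by apply: Sd_min; apply: gdist_walk; apply: nwalk_connect w.
Qed.

End Prod.
Arguments upd {k V} x i y.

End Part_P4.
Import Part_P4.

Module Part_P5.
Set Implicit Arguments. Unset Strict Implicit. Unset Printing Implicit Defensive.
Local Open Scope ring_scope.

Section Mxf.
Variable R : fieldType.

Definition mxf (T : finType) (f : T -> T -> R) : 'M[R]_#|T| :=
  \matrix_(i, j) f (enum_val i) (enum_val j).

Lemma sum_enum (T : finType) (F : T -> R) :
  \sum_(c < #|T|) F (enum_val c) = \sum_(x : T) F x.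
Proof. by rewrite -big_enum_val. Qed.

Lemma sum_ind (T : finType) (t : T) (G : T -> R) :
  \sum_(y : T) (t == y)%:R * G y = G t.
Proof.
rewrite (bigD1 t) //= eqxx mul1r big1 ?addr0 // => y yt.
by rewrite eq_sym (negbTE yt) mul0r.
Qed.

Lemma mxf_mul (T : finType) (f g : T -> T -> R) :
  mxf f *m mxf g = mxf (fun a b => \sum_z f a z * g z b).
Proof.
apply/matrixP => i j; rewrite !mxE.
rewrite -(sum_enum (fun z => f (enum_val i) z * g z (enum_val j))).
by apply: eq_bigr => c _; rewrite !mxE.
Qed.

Lemma mxf_add (T : finType) (f g : T -> T -> R) :
  mxf (fun a b => f a b + g a b) = mxf f + mxf g.
Proof. by apply/matrixP => i j; rewrite !mxE. Qed.

Lemma mxf_sum (T : finType) (I : Type) (r : seq I) (F : I -> T -> T -> R) :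
  mxf (fun a b => \sum_(i <- r) F i a b) = \sum_(i <- r) mxf (F i).
Proof. by apply/matrixP => i j; rewrite !mxE summxE; apply: eq_bigr => l _; rewrite mxE. Qed.

Lemma mxf_const (T : finType) (c : R) : mxf (fun _ _ : T => c) = const_mx c.
Proof. by apply/matrixP => i j; rewrite !mxE. Qed.

Definition pmx (T Y : finType) (pi : T -> Y) : 'M[R]_(#|T|, #|Y|) :=
  \matrix_(a, y) (pi (enum_val a) == enum_val y)%:R.

Lemma mxf_pull (T Y : finType) (pi : T -> Y) (F : Y -> Y -> R) :
  mxf (fun a b => F (pi a) (pi b)) = pmx pi *m mxf F *m (pmx pi)^T.
Proof.
apply/matrixP => i j; rewrite !mxE.
have inner c : \sum_j0 pmx pi i j0 * mxf F j0 c = F (pi (enum_val i)) (enum_val c).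
  rewrite -(sum_ind (pi (enum_val i)) (fun y0 => F y0 (enum_val c))).
  rewrite -(sum_enum (fun y0 => (pi (enum_val i) == y0)%:R * F y0 (enum_val c))).
  by apply: eq_bigr => l _; rewrite !mxE.
under eq_bigr do rewrite [(_ *m _) _ _]mxE inner !mxE.
rewrite (sum_enum (fun y => F (pi (enum_val i)) y * (pi (enum_val j) == y)%:R)).
under eq_bigr do rewrite mulrC.
by rewrite sum_ind.
Qed.

Lemma pmx_gram (T Y : finType) (pi : T -> Y) (m : R) :
  (forall y, \sum_(x : T) (pi x == y)%:R = m) ->
  (pmx pi)^T *m pmx pi = m%:M.
Proof.
move=> hm; apply/matrixP => y y'; rewrite !mxE.
under eq_bigr do rewrite !mxE.
rewrite (sum_enum (fun x => (pi x == enum_val y)%:R * (pi x == enum_val y')%:R)).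
case: (eqVneq y y') => [<-|yy'].
  by rewrite -(hm (enum_val y)) mulr1n; apply: eq_bigr => x _; case: eqP; rewrite ?mulr1 ?mulr0.
rewrite mulr0n big1 // => x _.
case: (eqVneq (pi x) (enum_val y)) => [h|]; last by rewrite mul0r.
rewrite h (inj_eq enum_val_inj) (negbTE yy') mulr0 //.
Qed.

End Mxf.

Section CharPolyZ.
Variable R : fieldType.

Lemma char_polyZ n (c : R) (A : 'M[R]_n) : c != 0 ->
  char_poly (c *: A) = c ^+ n *: (char_poly A \Po (c^-1 *: 'X)).
Proof.
move=> cz; rewrite /char_poly -det_map_mx -mul_polyC rmorphXn /= -detZ.
congr (\det _); apply/matrixP => i j; rewrite !mxE.
rewrite comp_polyB comp_polyC.
case: (i == j); rewrite ?mulr1n ?mulr0n /=.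
  by rewrite comp_polyX mulrBr mul_polyC scalerA mulfV // scale1r -polyCM.
by rewrite comp_poly0 !sub0r mulrN polyCM.
Qed.

End CharPolyZ.

End Part_P5.
Import Part_P5.

Module Part_P6.
Set Implicit Arguments. Unset Strict Implicit. Unset Printing Implicit Defensive.
Local Open Scope ring_scope.

Section Fiber.
Local Unset Implicit Arguments.
Variables (R : fieldType) (k : nat) (V : 'I_k -> finType).
Local Set Implicit Arguments.
Local Notation X := {dffun forall i, V i}.

Lemma fiber_eq (i : 'I_k) (y y' : V i) (phi : X -> R) :
  (forall x w, phi (upd x i w) = phi x) ->
  \sum_(x : X | x i == y) phi x = \sum_(x : X | x i == y') phi x.
Proof.
move=> hphi.
rewrite (reindex_onto (fun x => upd x i y) (fun x => upd x i y')); last first.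
  by move=> x /eqP <-; rewrite upd_upd upd_id.
apply: eq_big => x.
  rewrite upd_same eqxx /= upd_upd; apply/eqP/eqP => [<-|<-].
    by rewrite upd_same.
  by rewrite upd_id.
by move=> _; rewrite hphi.
Qed.

Lemma sum_split_coord (j : 'I_k) (y0 : V j) (phi : X -> R) (h : V j -> R) :
  (forall x w, phi (upd x j w) = phi x) ->
  \sum_(x : X) phi x * h (x j) = (\sum_(x : X | x j == y0) phi x) * \sum_(w : V j) h w.
Proof.
move=> hphi.
rewrite (partition_big (fun x : X => x j) predT) //= mulr_sumr.
apply: eq_bigr => w _.
rewrite (fiber_eq y0 w hphi) mulr_suml.
by apply: eq_bigr => x /eqP ->.
Qed.

Lemma sum_split0 (j : 'I_k) (phi : X -> R) (h : V j -> R) :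
  (forall x w, phi (upd x j w) = phi x) -> \sum_(w : V j) h w = 0 ->
  \sum_(x : X) phi x * h (x j) = 0.
Proof.
move=> hphi h0; case: (pickP (fun _ : V j => true)) => [y0 _|none].
  by rewrite (sum_split_coord y0 _ hphi) h0 mulr0.
by apply: big1 => x _; have := none (x j).
Qed.

End Fiber.

End Part_P6.
Import Part_P6.

Module Part_P7.
Set Implicit Arguments. Unset Strict Implicit. Unset Printing Implicit Defensive.
Local Open Scope ring_scope.

Lemma size_index_enum_ord k : size (index_enum 'I_k) = k.
Proof. by rewrite /index_enum unlock -enumT -cardE card_ord. Qed.

Section Main.
Local Unset Implicit Arguments.
Variables (R : rcfType) (k : nat) (V : 'I_k -> finType) (e : forall i, rel (V i)).
Hypothesis hk : (0 < k)%N.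
Hypothesis hsg : forall i, simple_graph (e i).
Hypothesis hc : forall i, connected_graph (e i).
Hypothesis hV : forall i, (1 < #|V i|)%N.
Hypothesis hcr : forall i, const_row_sums (distmx R (e i)).
Local Notation X := {dffun forall i, V i}.

Definition x0 : X := [ffun i => enum_val (Ordinal (ltnW (hV i)))].
Definition dd (i : 'I_k) (x y : V i) : R := (gdist (e i) x y)%:R.
Definition tt (i : 'I_k) : R := \sum_y dd i (x0 i) y.
Definition nR (i : 'I_k) : R := (#|V i|)%:R.
Definition ff (i : 'I_k) (x y : V i) : R := dd i x y - tt i / nR i.
Definition alpha : R := \sum_(i < k) tt i / nR i.
Definition CC (i : 'I_k) : 'M[R]_#|X| := mxf (fun a b : X => ff i (a i) (b i)).
Definition M0 : 'M[R]_#|X| := const_mx alpha.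

Lemma rowsum i x : \sum_y dd i x y = tt i.
Proof.
have [c hcc] := hcr i.
have H z : \sum_y dd i z y = c.
  rewrite -(hcc (enum_rank z)) -(sum_enum (dd i z)).
  by apply: eq_bigr => j _; rewrite mxE enum_rankK.
by rewrite /tt !H.
Qed.

Lemma colsum i y : \sum_x dd i x y = tt i.
Proof.
rewrite -(rowsum i y); apply: eq_bigr => x _.
by rewrite /dd gdist_sym //; case: (hsg i).
Qed.

Lemma nR_gt0 i : 0 < nR i.
Proof. by rewrite /nR ltr0n; apply: ltnW. Qed.

Lemma ff_row i x : \sum_y ff i x y = 0.
Proof.
rewrite big_split /= rowsum sumr_const -mulr_natr mulNr.
by rewrite -[#|xpredT|%:R]/(nR i) divfK ?subrr // gt_eqF // nR_gt0.
Qed.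

Lemma ff_col i y : \sum_x ff i x y = 0.
Proof.
rewrite big_split /= colsum sumr_const -mulr_natr mulNr.
by rewrite -[#|xpredT|%:R]/(nR i) divfK ?subrr // gt_eqF // nR_gt0.
Qed.

Lemma tt_gt0 i : 0 < tt i.
Proof.
have [a [b [_ _ ab]]] := card_gt1P (hV i).
have [y hy] : exists y, y != x0 i.
  case: (eqVneq a (x0 i)) => [ha|ha]; last by exists a.
  by exists b; rewrite -ha eq_sym.
rewrite /tt (bigD1 y) //=.
have h1 : 1 <= dd i (x0 i) y.
  by rewrite /dd ler1n; apply: gdist_gt0; [exact: hc | rewrite eq_sym].
have h2 : 0 <= \sum_(j | j != y) dd i (x0 i) j.
  by apply: sumr_ge0 => j _; rewrite /dd ler0n.
lra.
Qed.

Lemma alpha_gt0 : 0 < alpha.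
Proof.
have h i : 0 < tt i / nR i by rewrite divr_gt0 ?tt_gt0 ?nR_gt0.
rewrite /alpha (bigD1 (Ordinal hk)) //=.
have h1 := h (Ordinal hk).
have h2 : 0 <= \sum_(j < k | j != Ordinal hk) tt j / nR j.
  by apply: sumr_ge0 => j _; apply: ltW.
lra.
Qed.

Lemma distD : distmx R (cprod_rel e) = M0 + \sum_(i < k) CC i.
Proof.
rewrite /M0 -mxf_const /CC -mxf_sum -mxf_add.
apply/matrixP => a b; rewrite !mxE gdist_prod // /Sd natr_sum.
rewrite addrC /alpha -big_split /=; apply: eq_bigr => i _.
by rewrite /ff subrK.
Qed.

Lemma M0CC i : M0 *m CC i = 0.
Proof.
apply/matrixP => a b; rewrite !mxE.
under eq_bigr do rewrite !mxE.
rewrite (sum_enum (fun z : X => alpha * ff i (z i) (enum_val b i))).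
by apply: (@sum_split0 R k V i (fun _ => alpha) (fun w => ff i w (enum_val b i))) => //; apply: ff_col.
Qed.

Lemma CCCC i j : i != j -> CC i *m CC j = 0.
Proof.
move=> ij; apply/matrixP => a b; rewrite !mxE.
under eq_bigr do rewrite !mxE.
rewrite (sum_enum (fun z : X => ff i (enum_val a i) (z i) * ff j (z j) (enum_val b j))).
apply: (@sum_split0 R k V j (fun z : X => ff i (enum_val a i) (z i)) (fun w => ff j w (enum_val b j))).
  by move=> x w; rewrite upd_other // eq_sym.
by apply: ff_col.
Qed.

Lemma charD : 'X^(#|X| * k) * char_poly (distmx R (cprod_rel e)) =
  char_poly M0 * \prod_(i < k) char_poly (CC i).
Proof.
rewrite distD -[X in 'X^(_ * X)](size_index_enum_ord k).
apply: char_poly_orth_big; [exact: M0CC | exact: CCCC | exact: index_enum_uniq].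
Qed.

Definition mR (i : 'I_k) : R := \sum_(x : X) (x i == x0 i)%:R.

Lemma fiber_count i (y : V i) : \sum_(x : X) (x i == y)%:R = mR i.
Proof.
have E (z : V i) : \sum_(x : X) (x i == z)%:R = \sum_(x : X | x i == z) (1 : R).
  by rewrite [RHS]big_mkcond; apply: eq_bigr => x _; case: eqP.
rewrite /mR !E; apply: fiber_eq => x w //.
Qed.

Lemma mR_gt0 i : 0 < mR i.
Proof.
rewrite /mR (bigD1 x0) //= eqxx.
have h2 : 0 <= \sum_(x : X | x != x0) ((x i == x0 i)%:R : R).
  by apply: sumr_ge0 => x _; rewrite ler0n.
have h1 : (true%:R : R) = 1 by []. lra.
Qed.

Lemma charCC i : 'X^#|V i| * char_poly (CC i) =
  'X^#|X| * char_poly (mR i *: mxf (ff i)).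
Proof.
have -> : CC i = pmx R (fun x : X => x i) *m (mxf (ff i) *m (pmx R (fun x : X => x i))^T).
  by rewrite mulmxA /CC -mxf_pull.
rewrite char_poly_ABBA -mulmxA (pmx_gram (fiber_count i)) mul_mx_scalar //.
Qed.

Lemma distDi i : distmx R (e i) = const_mx (tt i / nR i) + mxf (ff i).
Proof. by apply/matrixP => a b; rewrite !mxE /ff addrC subrK. Qed.

Lemma constFF i : (const_mx (tt i / nR i) : 'M[R]_#|V i|) *m mxf (ff i) = 0.
Proof.
apply/matrixP => a b; rewrite !mxE.
under eq_bigr do rewrite !mxE.
rewrite -mulr_sumr (sum_enum (fun x => ff i x (enum_val b))) ff_col mulr0 //.
Qed.

Lemma charDi i : 'X * char_poly (distmx R (e i)) =
  ('X - (tt i)%:P) * char_poly (mxf (ff i)).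
Proof.
have h := char_poly_orth (constFF i); rewrite -distDi in h.
have hc2 := char_poly_const #|V i| (tt i / nR i).
rewrite -[_ *+ _]mulr_natr -[#|V i|%:R]/(nR i) divfK ?gt_eqF ?nR_gt0 // in hc2.
have nz : ('X^#|V i| : {poly R}) != 0 by rewrite monic_neq0 ?monicXn.
apply: (mulfI nz).
by rewrite mulrCA h mulrA hc2 -mulrA.
Qed.

Section Counting.
Variable P : pred R.
Hypothesis hP0 : ~~ P 0.
Hypothesis hPc : forall c x : R, 0 < c -> P (c * x) = P x.

Lemma cnt_X : cnt P 'X = 0%N.
Proof. by rewrite -['X]expr1 cnt_Xn. Qed.

Lemma cp_neq0 n (A : 'M[R]_n) : char_poly A != 0.
Proof. exact: monic_neq0 (char_poly_monic A). Qed.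

Lemma cntDi i : cnt P (char_poly (distmx R (e i))) =
  ((if P (tt i) then 1 else 0) + cnt P (char_poly (mxf (ff i))))%N.
Proof.
have := congr1 (cnt P) (charDi i).
rewrite !cntM ?polyX_eq0 ?polyXsubC_eq0 ?cp_neq0 // cnt_X add0n => ->.
by rewrite cnt_XsubC.
Qed.

Lemma cntCC i : cnt P (char_poly (CC i)) = cnt P (char_poly (mxf (ff i))).
Proof.
have := congr1 (cnt P) (charCC i).
rewrite !cntM ?cp_neq0 ?monic_neq0 ?monicXn // !cnt_Xn // !add0n => ->.
have mz : mR i != 0 by rewrite gt_eqF ?mR_gt0.
rewrite char_polyZ // cntZ ?expf_neq0 // cnt_comp ?invr_eq0 //.
by move=> x; apply: hPc; rewrite invr_gt0 mR_gt0.
Qed.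

Lemma cntM0 : cnt P (char_poly M0) = (if P (alpha *+ #|X|) then 1 else 0)%N.
Proof.
have := congr1 (cnt P) (char_poly_const #|X| alpha).
rewrite !cntM ?polyX_eq0 ?polyXsubC_eq0 ?cp_neq0 ?monic_neq0 ?monicXn //.
by rewrite cnt_X cnt_Xn // add0n => ->; rewrite cnt_XsubC.
Qed.

Lemma cntD : cnt P (char_poly (distmx R (cprod_rel e))) =
  (cnt P (char_poly M0) + \sum_(i < k) cnt P (char_poly (CC i)))%N.
Proof.
have := congr1 (cnt P) charD.
have pz : \prod_(i < k) char_poly (CC i) != 0.
  by apply/prodf_neq0 => j _; apply: cp_neq0.
rewrite !cntM ?cp_neq0 ?pz ?monic_neq0 ?monicXn //.
rewrite cnt_Xn // add0n => ->; congr (_ + _)%N.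
by rewrite cnt_prod // => j; apply: cp_neq0.
Qed.

End Counting.

Lemma negP0 : ~~ ((fun x : R => x < 0) 0). Proof. by rewrite /= ltxx. Qed.
Lemma negPc (c x : R) : 0 < c -> (c * x < 0) = (x < 0).
Proof. by move=> cp; rewrite pmulr_rlt0. Qed.
Lemma posP0 : ~~ ((fun x : R => 0 < x) 0). Proof. by rewrite /= ltxx. Qed.
Lemma posPc (c x : R) : 0 < c -> (0 < c * x) = (0 < x).
Proof. by move=> cp; rewrite pmulr_rgt0. Qed.

Lemma alphaN_gt0 : 0 < alpha *+ #|X|.
Proof.
rewrite pmulrn_rgt0 ?alpha_gt0 //; apply/card_gt0P; exists x0; done.
Qed.

Lemma main_neg : n_neg (distmx R (cprod_rel e)) =
  (\sum_(i < k) n_neg (distmx R (e i)))%N.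
Proof.
rewrite /n_neg -/(cnt _ _).
rewrite (cntD (fun x => x < 0) negP0) (cntM0 (fun x => x < 0) negP0) ltNge ltW ?alphaN_gt0 //= add0n.
apply: eq_bigr => i _; rewrite (cntCC (fun x => x < 0) negP0 negPc) -/(cnt _ _) (cntDi (fun x => x < 0) negP0).
by rewrite ltNge ltW ?tt_gt0.
Qed.

Lemma main_pos : (n_pos (distmx R (cprod_rel e)))%:Z =
    1 + \sum_(i < k) ((n_pos (distmx R (e i)))%:Z - 1).
Proof.
rewrite /n_pos -/(cnt _ _).
rewrite (cntD (fun x => 0 < x) posP0) (cntM0 (fun x => 0 < x) posP0) alphaN_gt0 /=.
rewrite PoszD; congr (_ + _).
rewrite (big_morph Posz PoszD (erefl _)); apply: eq_bigr => i _.
rewrite (cntCC (fun x => 0 < x) posP0 posPc) -/(cnt _ _).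
rewrite (cntDi (fun x => 0 < x) posP0) tt_gt0 PoszD.
by rewrite addrC addKr.
Qed.

End Main.

End Part_P7.
Import Part_P7.

Unset Implicit Arguments.
Local Open Scope ring_scope.

Theorem corollary7 (R : rcfType) (k : nat) (V : 'I_k -> finType)
  (e : forall i, rel (V i)) :
  (0 < k)%N ->
  (forall i, simple_graph (e i)) ->
  (forall i, connected_graph (e i)) ->
  (forall i, 1 < #|V i|)%N ->
  (forall i, const_row_sums (distmx R (e i))) ->
  n_neg (distmx R (cprod_rel e)) = (\sum_(i < k) n_neg (distmx R (e i)))%N /\
  (n_pos (distmx R (cprod_rel e)))%:Z =
    1 + \sum_(i < k) ((n_pos (distmx R (e i)))%:Z - 1).
Proof.
move=> hk hsg hc hV hcr; split.
- by eapply main_neg; eassumption.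
- by eapply main_pos; eassumption.
Qed.
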